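(* Let $Q$ be a multiplicative graph. Every $k$-face of a product $n$-cube of $Q$ is a product $k$-cube of $Q$.
   Context: Graphs are directed graphs $(V\overset{s}{\underset{t}{\leftleftarrows}}A)$, possibly with loops and multiple edges; the Cartesian product $Q_1\,\square\,Q_2$ has vertex set $V_1\times V_2$, arrows $A_1\times V_2\sqcup V_1\times A_2$, source $s_1\times\mathrm{id}\sqcup\mathrm{id}\times s_2$, target $t_1\times\mathrm{id}\sqcup\mathrm{id}\times t_2$; this product is associative up to canonical isomorphism. A multiplicative graph is a graph $Q$ with a morphism $\mu:Q\,\square\,Q\to Q$ such that $\mu\circ(\mu\,\square\,\mathrm{id})=\mu\circ(\mathrm{id}\,\square\,\mu)$; let $\mu_n:Q^{\square n}\to Q$ denote the iterated multiplication. Let $\mathrm{Q}_1$ be the graph with two vertices and one arrow between them, and $\mathrm{Q}_n=\mathrm{Q}_1\,\square\cdots\square\,\mathrm{Q}_1$ ($n$ factors). A $k$-face of $\mathrm{Q}_n$ is the subgraph (isomorphic to $\mathrm{Q}_k$) obtained by replacing $n-k$ of the factors $\mathrm{Q}_1$ by one of its vertices. An $n$-cube of $Q$ is a graph morphism $\mathrm{Q}_n\to Q$, and its $k$-faces are its restrictions to the $k$-faces of $\mathrm{Q}_n$. Each arrow $a$ of $Q$ gives a morphism $a:\mathrm{Q}_1\to Q$. A product $n$-cube is an $n$-cube of the form $\mu_n\circ(a_1\,\square\cdots\square\,a_n):\mathrm{Q}_n\to Q$ for arrows $a_1,\dots,a_n$ of $Q$. *)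

(* Defs.v *)
From HB Require Import structures.
From mathcomp Require Import all_boot.
Set Implicit Arguments. Unset Strict Implicit. Unset Printing Implicit Defensive.

Record graph := Graph { vert : Type; arr : Type;
  src : arr -> vert; tgt : arr -> vert }.

Record gmorph (G H : graph) := GMorph {
  mv : vert G -> vert H;
  ma : arr G -> arr H;
  mv_src : forall a, src (ma a) = mv (src a);
  mv_tgt : forall a, tgt (ma a) = mv (tgt a) }.

Definition gprod (G H : graph) : graph :=
  @Graph (vert G * vert H)%type ((arr G * vert H) + (vert G * arr H))%type
    (fun e => match e with inl (a, y) => (src a, y) | inr (x, b) => (x, src b) end)
    (fun e => match e with inl (a, y) => (tgt a, y) | inr (x, b) => (x, tgt b) end).

(* Multiplicative graph: mu : Q [] Q -> Q with mu o (mu [] id) = mu o (id [] mu)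
   (modulo the canonical isomorphism (Q[]Q)[]Q ~ Q[](Q[]Q)), written out on
   vertices and on the three kinds of arrows of the triple product. *)
Record mgraph := MGraph {
  mcarrier :> graph;
  mu : gmorph (gprod mcarrier mcarrier) mcarrier;
  mu_assocV : forall x y z : vert mcarrier,
    mv mu (mv mu (x, y), z) = mv mu (x, mv mu (y, z));
  mu_assocA1 : forall (a : arr mcarrier) (y z : vert mcarrier),
    ma mu (inl (ma mu (inl (a, y)), z)) = ma mu (inl (a, mv mu (y, z)));
  mu_assocA2 : forall (x : vert mcarrier) (b : arr mcarrier) (z : vert mcarrier),
    ma mu (inl (ma mu (inr (x, b)), z)) = ma mu (inr (x, ma mu (inl (b, z))));
  mu_assocA3 : forall (x y : vert mcarrier) (c : arr mcarrier),
    ma mu (inr (mv mu (x, y), c)) = ma mu (inr (x, ma mu (inr (y, c)))) }.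

(* The cube graph Q_(m+1) = Q_1 [] ... [] Q_1 (m+1 factors), in flat form:
   vertices are {0,1}-valued functions on the m+1 factors; an arrow is a pair
   (i, w): the arrow of Q_1 in factor i, and the vertices w of the other m
   factors (indexed through [lift i]). *)
Definition Qcube (m : nat) : graph :=
  @Graph {ffun 'I_m.+1 -> bool} ('I_m.+1 * {ffun 'I_m -> bool})%type
    (fun e => [ffun j => if unlift e.1 j is Some j' then e.2 j' else false])
    (fun e => [ffun j => if unlift e.1 j is Some j' then e.2 j' else true]).

Definition cube (Q : graph) (m : nat) := gmorph (Qcube m) Q.

(* A (k+1)-face of Q_(n+1) is given by the strictly increasing map
   sigma : 'I_(k+1) -> 'I_(n+1) listing the factors that are kept (in order),
   and by values x j for the remaining factors (values of x on the kept
   factors are irrelevant).  faceV/faceA is the inclusion of Q_(k+1),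
   identified with the face via the order-preserving identification of
   factors. *)
Definition faceV (k n : nat) (sigma : 'I_k.+1 -> 'I_n.+1)
    (x : {ffun 'I_n.+1 -> bool}) (v : {ffun 'I_k.+1 -> bool})
    : {ffun 'I_n.+1 -> bool} :=
  [ffun j => if [pick i | sigma i == j] is Some i then v i else x j].

Definition faceA (k n : nat) (sigma : 'I_k.+1 -> 'I_n.+1)
    (x : {ffun 'I_n.+1 -> bool}) (e : arr (Qcube k)) : arr (Qcube n) :=
  (sigma e.1, [ffun j' => faceV sigma x (src e) (lift (sigma e.1) j')]).

Definition restrV (Q : graph) (n k : nat) (c : cube Q n)
    (sigma : 'I_k.+1 -> 'I_n.+1) (x : {ffun 'I_n.+1 -> bool}) :=
  fun v => mv c (faceV sigma x v).
Definition restrA (Q : graph) (n k : nat) (c : cube Q n)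
    (sigma : 'I_k.+1 -> 'I_n.+1) (x : {ffun 'I_n.+1 -> bool}) :=
  fun e => ma c (faceA sigma x e).

Section Iterated.
Variable Q : mgraph.

(* Iterated multiplication mu_n = mu o (mu_(n-1) [] id), mu_1 = id, on the
   left-nested product Q^[]n: on vertices (x, s) = (x_1,...,x_n) ... *)
Definition muVs (x : vert Q) (s : seq (vert Q)) : vert Q :=
  foldl (fun u y => mv (mu Q) (u, y)) x s.

(* ... and on the arrow (l, alpha, r) = (x_1,..,x_(i-1), alpha, x_(i+1),..,x_n). *)
Definition muAs (l : seq (vert Q)) (alpha : arr Q) (r : seq (vert Q)) : arr Q :=
  foldl (fun beta y => ma (mu Q) (inl (beta, y)))
    (if l is x :: l' then ma (mu Q) (inr (muVs x l', alpha)) else alpha) r.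

(* The product (n+1)-cube mu_(n+1) o (a_0 [] ... [] a_n), for arrows
   a : 'I_(n+1) -> arr Q. *)
Definition pvtx (n : nat) (a : 'I_n.+1 -> arr Q) (v : {ffun 'I_n.+1 -> bool})
    (j : 'I_n.+1) : vert Q :=
  if v j then tgt (a j) else src (a j).

Definition prodV (n : nat) (a : 'I_n.+1 -> arr Q) (v : vert (Qcube n)) : vert Q :=
  let s := [seq pvtx a v j | j <- enum 'I_n.+1] in
  muVs (head (pvtx a v ord0) s) (behead s).

Definition prodA (n : nat) (a : 'I_n.+1 -> arr Q) (e : arr (Qcube n)) : arr Q :=
  let v := src e in
  muAs [seq pvtx a v j | j <- [seq j : 'I_n.+1 <- enum 'I_n.+1 | (nat_of_ord j < nat_of_ord e.1)%N]] (a e.1)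
       [seq pvtx a v j | j <- [seq j : 'I_n.+1 <- enum 'I_n.+1 | (nat_of_ord e.1 < nat_of_ord j)%N]].

Definition is_product_cube (n : nat) (c : cube Q n) : Prop :=
  exists a : 'I_n.+1 -> arr Q,
    (forall v, mv c v = prodV a v) /\ (forall e, ma c e = prodA a e).

Definition is_product_cube_maps (k : nat) (fV : vert (Qcube k) -> vert Q)
    (fA : arr (Qcube k) -> arr Q) : Prop :=
  exists b : 'I_k.+1 -> arr Q,
    (forall v, fV v = prodV b v) /\ (forall e, fA e = prodA b e).

End Iterated.

(* Main.v *)
Require Import Defs.
From mathcomp Require Import all_boot zify.
Set Implicit Arguments. Unset Strict Implicit. Unset Printing Implicit Defensive.

Definition mVs (Q : mgraph) (d : vert Q) (s : seq (vert Q)) := muVs (head d s) (behead s).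

Lemma muVs_M (Q : mgraph) (s : seq (vert Q)) u y :
  mv (mu Q) (u, muVs y s) = muVs (mv (mu Q) (u, y)) s.
Proof. elim: s y => [|z s IH] y //=. by rewrite IH mu_assocV. Qed.

Lemma F_muVs (Q : mgraph) (s : seq (vert Q)) b y :
  ma (mu Q) (inl (b, muVs y s)) =
  foldl (fun beta y => ma (mu Q) (inl (beta, y))) (ma (mu Q) (inl (b, y))) s.
Proof. elim: s y => [|z s IH] y //=. by rewrite IH mu_assocA1. Qed.

Lemma inr_foldl (Q : mgraph) (r : seq (vert Q)) u b :
  ma (mu Q) (inr (u, foldl (fun beta y => ma (mu Q) (inl (beta, y))) b r)) =
  foldl (fun beta y => ma (mu Q) (inl (beta, y))) (ma (mu Q) (inr (u, b))) r.
Proof. elim: r b => [|y r IH] b //=. by rewrite IH -mu_assocA2. Qed.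

Lemma inr_muAs (Q : mgraph) u l (al : arr Q) r :
  ma (mu Q) (inr (u, muAs l al r)) = muAs (u :: l) al r.
Proof.
rewrite /muAs inr_foldl; case: l => [|x l] //=.
by rewrite -mu_assocA3 muVs_M.
Qed.

Lemma muAs_cons_muVs (Q : mgraph) x s l (al : arr Q) r :
  muAs (muVs x s :: l) al r = muAs (x :: s ++ l) al r.
Proof. by rewrite /muAs /muVs foldl_cat. Qed.

Lemma muVs_map (Q : mgraph) d (Ls : seq (seq (vert Q))) u :
  all (fun s => 0 < size s) Ls ->
  muVs u (map (mVs d) Ls) = muVs u (flatten Ls).
Proof.
elim: Ls u => [|s Ls IH] u //=; case: s => [|y s] //= H.
rewrite /mVs /= muVs_M IH // /muVs /= foldl_cat //.
Qed.

Lemma mVs_flatten (Q : mgraph) d (Ls : seq (seq (vert Q))) :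
  0 < size Ls -> all (fun s => 0 < size s) Ls ->
  mVs d (map (mVs d) Ls) = mVs d (flatten Ls).
Proof.
case: Ls => [|[|y s] Ls] //= _ H.
rewrite /mVs /= muVs_map //.
by rewrite /muVs foldl_cat.
Qed.

Lemma foldlF_map (Q : mgraph) d (Rs : seq (seq (vert Q))) b :
  all (fun s => 0 < size s) Rs ->
  foldl (fun beta y => ma (mu Q) (inl (beta, y))) b (map (mVs d) Rs) =
  foldl (fun beta y => ma (mu Q) (inl (beta, y))) b (flatten Rs).
Proof.
elim: Rs b => [|s Rs IH] b //=; case: s => [|y s] //= H.
by rewrite foldl_cat IH // /mVs /= F_muVs.
Qed.

Lemma muAs_nest (Q : mgraph) d (Ls Rs : seq (seq (vert Q))) l (al : arr Q) r :
  all (fun s => 0 < size s) Ls -> all (fun s => 0 < size s) Rs ->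
  muAs (map (mVs d) Ls) (muAs l al r) (map (mVs d) Rs) =
  muAs (flatten Ls ++ l) al (r ++ flatten Rs).
Proof.
move=> HL HR.
rewrite {1}/muAs foldlF_map //.
have -> : muAs (flatten Ls ++ l) al (r ++ flatten Rs) =
  foldl (fun beta y => ma (mu Q) (inl (beta, y))) (muAs (flatten Ls ++ l) al r) (flatten Rs).
  by rewrite /muAs foldl_cat.
congr (foldl _ _ _).
case: Ls HL => [|[|y s] Ls] //= HL.
rewrite inr_muAs muVs_map // muAs_cons_muVs.
by rewrite -catA /mVs /= muAs_cons_muVs.
Qed.

Lemma src_foldl (Q : mgraph) (r : seq (vert Q)) b :
  src (foldl (fun beta y => ma (mu Q) (inl (beta, y))) b r) = muVs (src b) r.
Proof. elim: r b => [|y r IH] b //=. by rewrite IH mv_src. Qed.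

Lemma tgt_foldl (Q : mgraph) (r : seq (vert Q)) b :
  tgt (foldl (fun beta y => ma (mu Q) (inl (beta, y))) b r) = muVs (tgt b) r.
Proof. elim: r b => [|y r IH] b //=. by rewrite IH mv_tgt. Qed.

Lemma src_muAs (Q : mgraph) d l (al : arr Q) r :
  src (muAs l al r) = mVs d (l ++ src al :: r).
Proof.
rewrite /muAs src_foldl; case: l => [|x l] //=.
by rewrite mv_src /mVs /= /muVs foldl_cat.
Qed.

Lemma tgt_muAs (Q : mgraph) d l (al : arr Q) r :
  tgt (muAs l al r) = mVs d (l ++ tgt al :: r).
Proof.
rewrite /muAs tgt_foldl; case: l => [|x l] //=.
by rewrite mv_tgt /mVs /= /muVs foldl_cat.
Qed.

Definition pp n k (s : 'I_k.+1 -> 'I_n.+1) (i : nat) : nat :=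
  if i <= k then nat_of_ord (s (inord i)) else n.+1.
Definition st n k (s : 'I_k.+1 -> 'I_n.+1) (i : nat) : nat :=
  if i == 0 then 0 else pp s i.
Definition pre n k (s : 'I_k.+1 -> 'I_n.+1) (i : nat) : seq nat :=
  if i == 0 then iota 0 (pp s 0) else [::].
Definition post n k (s : 'I_k.+1 -> 'I_n.+1) (i : nat) : seq nat :=
  iota (pp s i).+1 (pp s i.+1 - (pp s i).+1).
Definition blk n k (s : 'I_k.+1 -> 'I_n.+1) (i : nat) : seq nat :=
  iota (st s i) (st s i.+1 - st s i).

Section C.
Lemma pp_ord n k (s : 'I_k.+1 -> 'I_n.+1) (i : 'I_k.+1) : pp s i = s i.
Proof. by rewrite /pp -ltnS ltn_ord inord_val. Qed.

Lemma pp_lt n k (s : 'I_k.+1 -> 'I_n.+1)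
  (hs : forall i j : 'I_k.+1, (i < j)%N -> (s i < s j)%N) i j :
  i < j -> j <= k.+1 -> pp s i < pp s j.
Proof.
move=> lij ljk; rewrite /pp.
have -> : i <= k by rewrite -ltnS (leq_trans lij).
case: ifP => hj; last exact: ltn_ord.
by apply: hs; rewrite !inordK // ltnS // (leq_trans _ hj) // ltnW.
Qed.

Lemma pp_le n k (s : 'I_k.+1 -> 'I_n.+1)
  (hs : forall i j : 'I_k.+1, (i < j)%N -> (s i < s j)%N) i j :
  i <= j -> j <= k.+1 -> pp s i <= pp s j.
Proof.
rewrite leq_eqVlt => /orP[/eqP -> //|lij] ljk.
by rewrite ltnW // pp_lt.
Qed.

Lemma ppk1 n k (s : 'I_k.+1 -> 'I_n.+1) : pp s k.+1 = n.+1.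
Proof. by rewrite /pp ltnn. Qed.

Lemma iota_split a b c : a <= b -> b <= c -> iota a (c - a) = iota a (b - a) ++ iota b (c - b).
Proof. move=> hab hbc; have -> : c - a = (b - a) + (c - b) by lia. by rewrite iotaD subnKC. Qed.

Lemma iota_head a b : a < b -> iota a (b - a) = a :: iota a.+1 (b - a.+1).
Proof. move=> hab; have -> : b - a = (b - a.+1).+1 by lia. by []. Qed.

Lemma blk_eq n k (s : 'I_k.+1 -> 'I_n.+1)
  (hs : forall i j : 'I_k.+1, (i < j)%N -> (s i < s j)%N) i :
  i <= k -> blk s i = pre s i ++ pp s i :: post s i.
Proof.
move=> hik; rewrite /blk /pre /post /st /=.
have hlt : pp s i < pp s i.+1 by apply: pp_lt.
case: eqP hlt => [->|_] hlt /=.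
  rewrite (iota_split (b := pp s 0)) //; last exact: ltnW.
  by rewrite subn0 iota_head.
by rewrite iota_head.
Qed.

Lemma st_le n k (s : 'I_k.+1 -> 'I_n.+1)
  (hs : forall i j : 'I_k.+1, (i < j)%N -> (s i < s j)%N) i j :
  i <= j -> j <= k.+1 -> st s i <= st s j.
Proof.
move=> hij hjk; rewrite /st; case: eqP => // hi.
case: eqP => [ej|_]; first by move: hij; rewrite ej leqn0 => /eqP.
exact: pp_le.
Qed.

Lemma flat_blk n k (s : 'I_k.+1 -> 'I_n.+1)
  (hs : forall i j : 'I_k.+1, (i < j)%N -> (s i < s j)%N) m d :
  m + d <= k.+1 -> flatten (map (blk s) (iota m d)) = iota (st s m) (st s (m + d) - st s m).
Proof.
elim: d => [|d IH] hmd; first by rewrite addn0 subnn.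
rewrite -addn1 iotaD map_cat flatten_cat IH; last by rewrite (leq_trans _ hmd) // addnS.
rewrite /= cats0 /blk addn1 addnS.
rewrite -iota_split //; apply: st_le => //; try lia.
Qed.

Lemma faceV_out n k (s : 'I_k.+1 -> 'I_n.+1) x v j :
  j <= n -> (forall i : 'I_k.+1, nat_of_ord (s i) != j) ->
  faceV s x v (inord j) = x (inord j).
Proof.
move=> hj hn; rewrite /faceV ffunE; case: pickP => [i /eqP h|//].
by move: (hn i); rewrite h inordK ?eqxx.
Qed.

Lemma faceV_in n k (s : 'I_k.+1 -> 'I_n.+1)
  (hs : forall i j : 'I_k.+1, (i < j)%N -> (s i < s j)%N) x v i :
  faceV s x v (s i) = v i.
Proof.
rewrite /faceV ffunE; case: pickP => [i' /eqP h|h]; last by move: (h i); rewrite eqxx.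
case: (ltngtP i' i) => [l|l|e].
- by move: (hs _ _ l); rewrite h ltnn.
- by move: (hs _ _ l); rewrite h ltnn.
- by rewrite (val_inj e).
Qed.

Lemma pre_out n k (s : 'I_k.+1 -> 'I_n.+1)
  (hs : forall i j : 'I_k.+1, (i < j)%N -> (s i < s j)%N) i j :
  j \in pre s i -> j <= n /\ forall i' : 'I_k.+1, nat_of_ord (s i') != j.
Proof.
rewrite /pre; case: eqP => // _; rewrite mem_iota add0n => /andP[_ hj].
have h0 : pp s 0 <= n by rewrite /pp leq0n -ltnS ltn_ord.
split; first by lia.
move=> i'; apply/eqP => e; move: hj; rewrite -e -pp_ord.
by rewrite ltnNge pp_le // ltnW.
Qed.

Lemma post_out n k (s : 'I_k.+1 -> 'I_n.+1)
  (hs : forall i j : 'I_k.+1, (i < j)%N -> (s i < s j)%N) i j :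
  i <= k -> j \in post s i -> j <= n /\ forall i' : 'I_k.+1, nat_of_ord (s i') != j.
Proof.
move=> hik; rewrite /post mem_iota => /andP[h1 h2].
have hlt : pp s i < pp s i.+1 by apply: pp_lt.
rewrite subnKC // in h2.
have hn : pp s i.+1 <= n.+1.
  by rewrite -(ppk1 s) pp_le.
split; first by lia.
move=> i'; apply/eqP => e; move: h1 h2; rewrite -e -pp_ord => h1 h2.
case: (leqP i' i) => l.
  have := pp_le hs l (leq_trans hik (leqnSn _)); lia.
have := pp_le hs l (ltnW (ltn_ord i')); lia.
Qed.
End C.

Lemma enum_map T m (f : 'I_m.+1 -> T) :
  map f (enum 'I_m.+1) = map (fun j => f (inord j)) (iota 0 m.+1).
Proof.
rewrite -val_enum_ord -map_comp; apply: eq_map => i /=; by rewrite inord_val.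
Qed.

Lemma filter_enum_map T m (f : 'I_m.+1 -> T) (P : pred nat) :
  map f [seq j <- enum 'I_m.+1 | P (nat_of_ord j)] =
  map (fun j => f (inord j)) [seq j <- iota 0 m.+1 | P j].
Proof.
rewrite -val_enum_ord filter_map -map_comp; apply: eq_map => i /=; by rewrite inord_val.
Qed.

Lemma filter_lt m N : m <= N -> [seq j <- iota 0 N | j < m] = iota 0 m.
Proof.
move=> h.
have -> : iota 0 N = iota 0 m ++ iota m (N - m).
  by rewrite -{1}(subn0 N) (iota_split (b:=m)) // subn0.
rewrite filter_cat.
have -> : [seq j <- iota m (N - m) | j < m] = [::].
  apply/eqP; rewrite -[_ == _]negbK -has_filter; apply/hasPn => j.
  by rewrite mem_iota -leqNgt => /andP[].
rewrite cats0; apply/all_filterP/allP => j; by rewrite mem_iota.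
Qed.

Lemma filter_gt m N : m < N -> [seq j <- iota 0 N | m < j] = iota m.+1 (N - m.+1).
Proof.
move=> h.
have -> : iota 0 N = iota 0 m.+1 ++ iota m.+1 (N - m.+1).
  by rewrite -{1}(subn0 N) (iota_split (b:=m.+1)) // subn0.
rewrite filter_cat.
have -> : [seq j <- iota 0 m.+1 | m < j] = [::].
  apply/eqP; rewrite -[_ == _]negbK -has_filter; apply/hasPn => j.
  by rewrite mem_iota -leqNgt.
rewrite /=; apply/all_filterP/allP => j; by rewrite mem_iota => /andP[].
Qed.

Lemma mVs_def (Q : mgraph) d d' (s : seq (vert Q)) : 0 < size s -> mVs d s = mVs d' s.
Proof. by case: s. Qed.

Definition bb (Q : mgraph) n k (a : 'I_n.+1 -> arr Q) (s : 'I_k.+1 -> 'I_n.+1)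
  (x : {ffun 'I_n.+1 -> bool}) (i : 'I_k.+1) : arr Q :=
  muAs (map (fun j => pvtx a x (inord j)) (pre s i)) (a (s i))
       (map (fun j => pvtx a x (inord j)) (post s i)).

Lemma mapG_pre (Q : mgraph) n k (a : 'I_n.+1 -> arr Q) (s : 'I_k.+1 -> 'I_n.+1)
  (hs : forall i j : 'I_k.+1, (i < j)%N -> (s i < s j)%N) x v j :
  map (fun t => pvtx a (faceV s x v) (inord t)) (pre s j) =
            map (fun t => pvtx a x (inord t)) (pre s j).
Proof.
  apply/eq_in_map => t ht; have [h1 h2] := pre_out hs ht.
  by rewrite /pvtx faceV_out.
Qed.

Lemma mapG_post (Q : mgraph) n k (a : 'I_n.+1 -> arr Q) (s : 'I_k.+1 -> 'I_n.+1)
  (hs : forall i j : 'I_k.+1, (i < j)%N -> (s i < s j)%N) x v j : j <= k ->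
  map (fun t => pvtx a (faceV s x v) (inord t)) (post s j) =
            map (fun t => pvtx a x (inord t)) (post s j).
Proof.
  move=> hj; apply/eq_in_map => t ht; have [h1 h2] := post_out hs hj ht.
  by rewrite /pvtx faceV_out.
Qed.

Lemma key_pvtx (Q : mgraph) n k (a : 'I_n.+1 -> arr Q) (s : 'I_k.+1 -> 'I_n.+1)
  (hs : forall i j : 'I_k.+1, (i < j)%N -> (s i < s j)%N) x d v j :
  j <= k ->
  pvtx (bb a s x) v (inord j) =
  mVs d (map (fun t => pvtx a (faceV s x v) (inord t)) (blk s j)).
Proof.
move=> hj.
rewrite blk_eq // map_cat /=.
have Hpre : map (fun t => pvtx a (faceV s x v) (inord t)) (pre s j) =
            map (fun t => pvtx a x (inord t)) (pre s j).
  apply/eq_in_map => t ht; have [h1 h2] := pre_out hs ht.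
  by rewrite /pvtx faceV_out.
have Hpost : map (fun t => pvtx a (faceV s x v) (inord t)) (post s j) =
            map (fun t => pvtx a x (inord t)) (post s j).
  apply/eq_in_map => t ht; have [h1 h2] := post_out hs hj ht.
  by rewrite /pvtx faceV_out.
have Hp : pp s j = s (inord j) by rewrite /pp hj.
rewrite Hpre Hpost Hp inord_val {1 3}/pvtx faceV_in //.
rewrite /bb inordK //.
by case: (v (inord j)); [rewrite (tgt_muAs d) | rewrite (src_muAs d)].
Qed.

Lemma prodV_mVs (Q : mgraph) n (a : 'I_n.+1 -> arr Q) v d :
  prodV a v = mVs d (map (fun j => pvtx a v (inord j)) (iota 0 n.+1)).
Proof.
have -> : prodV a v = mVs (pvtx a v ord0) (map (pvtx a v) (enum 'I_n.+1)) by [].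
by rewrite enum_map (mVs_def _ d) // size_map size_iota.
Qed.

Lemma blk_size n k (s : 'I_k.+1 -> 'I_n.+1)
  (hs : forall i j : 'I_k.+1, (i < j)%N -> (s i < s j)%N) j :
  j <= k -> 0 < size (blk s j).
Proof. by move=> hj; rewrite blk_eq // size_cat /= addnS. Qed.

Lemma iota_all n k (s : 'I_k.+1 -> 'I_n.+1)
  (hs : forall i j : 'I_k.+1, (i < j)%N -> (s i < s j)%N) :
  iota 0 n.+1 = flatten (map (blk s) (iota 0 k.+1)).
Proof.
rewrite flat_blk // add0n /st /= ppk1 subn0 //.
Qed.

Theorem mainTheorem4 (Q : mgraph) (n k : nat) (c : cube Q n)
    (hc : is_product_cube c)
    (sigma : 'I_k.+1 -> 'I_n.+1)
    (hsigma : forall i j : 'I_k.+1, (i < j)%N -> (sigma i < sigma j)%N)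
    (x : {ffun 'I_n.+1 -> bool}) :
  is_product_cube_maps (restrV c sigma x) (restrA c sigma x).
Proof.
case: hc => a [hV hA].
pose d := src (a ord0).
exists (bb a sigma x); split.
  move=> v; rewrite /restrV hV (prodV_mVs _ _ d) (prodV_mVs _ _ d).
  rewrite (iota_all hsigma) map_flatten -map_comp.
  set G := (fun j => pvtx a (faceV sigma x v) (inord j)).
  rewrite -(@mVs_flatten Q d [seq (map G \o blk sigma) i | i <- iota 0 k.+1]); last first.
    rewrite all_map; apply/allP => j; rewrite mem_iota => /andP[_ hj] /=.
    by rewrite size_map blk_size.
    by rewrite size_map size_iota.
  rewrite -map_comp; congr mVs; apply/eq_in_map => j; rewrite mem_iota => /andP[_ hj] /=.
  by rewrite (@key_pvtx Q n k a sigma hsigma x d v j) // -ltnS -(add0n k.+1).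
move=> e; rewrite /restrA hA /prodA.
have -> : src (faceA sigma x e) = faceV sigma x (src e).
  apply/ffunP => j; rewrite {1}ffunE /=; case: unliftP => [j'|] ->.
    by rewrite ffunE.
  by rewrite faceV_in // /src /= ffunE unlift_none.
have -> : (faceA sigma x e).1 = sigma e.1 by [].
set v := src e; set i := e.1.
rewrite !filter_enum_map (@filter_enum_map _ _ _ (fun t => t < sigma i))
  (@filter_enum_map _ _ _ (fun t => t < i)).
rewrite filter_lt ?filter_gt ?filter_lt //; try by apply: ltnW.
set G := fun j => pvtx a (faceV sigma x v) (inord j).
have hik : (i <= k)%N by rewrite -ltnS ltn_ord.
have HL : map (fun j => pvtx (bb a sigma x) v (inord j)) (iota 0 i)
   = map (mVs d) (map (map G \o blk sigma) (iota 0 i)).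
  rewrite -map_comp; apply/eq_in_map => j; rewrite mem_iota => /andP[_ hj] /=.
  rewrite (@key_pvtx Q n k a sigma hsigma x d v j) //; lia.
have HR : map (fun j => pvtx (bb a sigma x) v (inord j)) (iota i.+1 (k.+1 - i.+1))
   = map (mVs d) (map (map G \o blk sigma) (iota i.+1 (k.+1 - i.+1))).
  rewrite -map_comp; apply/eq_in_map => j; rewrite mem_iota => /andP[hj1 hj] /=.
  rewrite (@key_pvtx Q n k a sigma hsigma x d v j) //; lia.
rewrite HL HR /bb muAs_nest; first last.
- rewrite all_map; apply/allP => j; rewrite mem_iota => /andP[hj1 hj] /=.
  rewrite size_map blk_size //; lia.
- rewrite all_map; apply/allP => j; rewrite mem_iota => /andP[hj1 hj] /=.
  rewrite size_map blk_size //; lia.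
congr muAs.
- rewrite -(@mapG_pre Q n k a sigma hsigma x v i) map_comp -map_flatten -map_cat.
  rewrite (flat_blk hsigma); last by rewrite add0n ltnW // ltnS.
  congr map; rewrite -pp_ord add0n /st /pre /=.
  by case: (nat_of_ord i) => [|m] //=; rewrite subn0 cats0.
- rewrite -(@mapG_post Q n k a sigma hsigma x v i hik) map_comp -map_flatten -map_cat.
  rewrite (flat_blk hsigma); last by rewrite subnKC.
  congr map; rewrite subnKC // -pp_ord /st /= ppk1 /post.
  rewrite -iota_split //; first exact: pp_lt.
  by rewrite -(ppk1 sigma) pp_le.
Qed.
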